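(* Let $R,L,d>0$, $\alpha\in(0,1]$, $A\ge1$, and $\Sigma_1,\Sigma_2\in\mathscr{C}^{1,\alpha}_{m,n}(R,L,d)$ with $d_{\mathcal{H}}(\Sigma_1,\Sigma_2)<\min\{2^{-6}A^{-2}R^2,\ L^{-2/\alpha},\ 1\}$. If $x\in\Sigma_1$, $y\in\Sigma_2$ satisfy $|x-y|\le A\,d_{\mathcal{H}}(\Sigma_1,\Sigma_2)$, then $\angle(T_x\Sigma_1,T_y\Sigma_2)\le C_{ang}\,d_{\mathcal{H}}(\Sigma_1,\Sigma_2)^{\alpha/2}$ with $C_{ang}=C_{ang}(L,A)=L(1+(4A)^2)+2A$.
   Context: $\mathscr{C}^{1,\alpha}_{m,n}(R,L,d)$ is the set of compact $C^{1,\alpha}$ embedded $m$-dimensional submanifolds $\Sigma\subset\mathbb{R}^n$ such that: (i) $\Sigma\subset\overline{B}^n(0,d)$; (ii) for each $x\in\Sigma$ there is $f_x\in C^{1,\alpha}(T_x\Sigma,(T_x\Sigma)^\perp)$ with $\Sigma\cap B(x,R)=(x+\operatorname{graph}f_x)\cap B(x,R)$, $f_x(0)=0$, $Df_x(0)=0$; (iii) $\|Df_x(\xi)-Df_x(\eta)\|\le L|\xi-\eta|^\alpha$ for all $\xi,\eta\in T_x\Sigma$, and $\operatorname{lip}(f_x)\le1$. $d_{\mathcal{H}}(A,B)=\sup_{y\in A}\operatorname{dist}(y,B)+\sup_{z\in B}\operatorname{dist}(z,A)$. For linear subspaces $U,V$ of equal dimension, $\angle(U,V)=\|U_\natural-V_\natural\|$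 where $U_\natural$ is orthogonal projection onto $U$. *)

(* Defs.v *)
From HB Require Import structures.
From mathcomp Require Import ssreflect ssrfun ssrbool eqtype ssrnat seq fintype bigop.
From Stdlib Require Import Reals ClassicalEpsilon.

Set Implicit Arguments.
Unset Strict Implicit.
Unset Printing Implicit Defensive.

Local Open Scope R_scope.

Lemma Rplus_assoc_ssr : associative Rplus.
Proof. by move=> a b c; rewrite Rplus_assoc. Qed.
HB.instance Definition _ := Monoid.isComLaw.Build R 0%R Rplus Rplus_assoc_ssr Rplus_comm Rplus_0_l.

Definition vec (n : nat) := 'I_n -> R.

Definition vzero {n} : vec n := fun _ => 0.
Definition vadd {n} (u v : vec n) : vec n := fun i => u i + v i.
Definition vsub {n} (u v : vec n) : vec n := fun i => u i - v i.
Definition vscale {n} (c : R) (u : vec n) : vec n := fun i => c * u i.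
Definition dot {n} (u v : vec n) : R := \big[Rplus/0]_(i < n) (u i * v i).
Definition vnorm {n} (u : vec n) : R := sqrt (dot u u).

(* Real power with the convention 0^a = 0 (used only for a > 0 at base 0). *)
Definition rpow (x a : R) : R := if Rlt_dec 0 x then Rpower x a else 0.

(* Supremum of a set of reals (meaningful when nonempty and bounded above). *)
Definition Rsup (E : R -> Prop) : R :=
  epsilon (inhabits 0) (fun l => (bound E /\ exists r, E r) -> is_lub E l).
Definition Rinf (E : R -> Prop) : R := - Rsup (fun r => E (- r)).

Definition dist {n} (y : vec n) (B : vec n -> Prop) : R :=
  Rinf (fun r => exists b, B b /\ r = vnorm (vsub y b)).

Definition dH {n} (A B : vec n -> Prop) : R :=
  Rsup (fun r => exists y, A y /\ r = dist y B)
  + Rsup (fun r => exists z, B z /\ r = dist z A).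

Definition closed_set {n} (S : vec n -> Prop) : Prop :=
  forall z, (forall eps, 0 < eps -> exists y, S y /\ vnorm (vsub y z) < eps) -> S z.

(* Tangent space T_x S (tangent cone: limits of t (y - x), y in S, y -> x, t > 0).
   For the sets of the class below it is the usual tangent space. *)
Definition tangent_space {n} (S : vec n -> Prop) (x : vec n) : vec n -> Prop :=
  fun v => forall eps, 0 < eps -> exists y t, S y /\ 0 < t /\
     vnorm (vsub y x) < eps /\ vnorm (vsub (vscale t (vsub y x)) v) < eps.

Definition subspace_dim {n} (m : nat) (U : vec n -> Prop) : Prop :=
  exists e : 'I_m -> vec n,
    (forall i j, dot (e i) (e j) = if i == j then 1 else 0) /\
    forall v, U v <-> exists c : 'I_m -> R,
        v = (fun k => \big[Rplus/0]_(i < m) (c i * e i k)).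

Definition orthogonal_to {n} (U : vec n -> Prop) (w : vec n) : Prop :=
  forall u, U u -> dot u w = 0.

Definition linear_on {n} (U : vec n -> Prop) (T : vec n -> vec n) : Prop :=
  forall a b u v, U u -> U v -> T (vadd (vscale a u) (vscale b v)) = vadd (vscale a (T u)) (vscale b (T v)).

Definition has_derivative_on {n} (U : vec n -> Prop) (f : vec n -> vec n)
    (xi : vec n) (D : vec n -> vec n) : Prop :=
  linear_on U D /\
  forall eps, 0 < eps -> exists delta, 0 < delta /\
    forall eta, U eta -> vnorm (vsub eta xi) < delta ->
      vnorm (vsub (vsub (f eta) (f xi)) (D (vsub eta xi))) <= eps * vnorm (vsub eta xi).

(* The class  C^{1,alpha}_{m,n}(R,L,d)  (Rr plays the role of R).
   "compact" = closed and bounded (Heine-Borel); the C^{1,alpha} embedded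
   submanifold structure is provided by the local graph charts (ii)-(iii). *)
Definition C1a_class (m n : nat) (alpha Rr L d : R) (S : vec n -> Prop) : Prop :=
  closed_set S /\
  (forall x, S x -> vnorm x <= d) /\
  forall x, S x ->
    let T := tangent_space S x in
    subspace_dim m T /\
    exists (f : vec n -> vec n) (Df : vec n -> vec n -> vec n),
      (forall xi, T xi -> orthogonal_to T (f xi)) /\
      (forall xi, T xi -> has_derivative_on T f xi (Df xi)) /\
      (forall z, (S z /\ vnorm (vsub z x) < Rr) <->
                 ((exists xi, T xi /\ z = vadd x (vadd xi (f xi))) /\ vnorm (vsub z x) < Rr)) /\
      f vzero = vzero /\
      (forall h, T h -> Df vzero h = vzero) /\
      (forall xi eta h, T xi -> T eta -> T h ->
         vnorm (vsub (Df xi h) (Df eta h)) <= L * rpow (vnorm (vsub xi eta)) alpha * vnorm h) /\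
      (forall xi eta, T xi -> T eta -> vnorm (vsub (f xi) (f eta)) <= vnorm (vsub xi eta)).

Definition orth_proj {n} (U : vec n -> Prop) (v u : vec n) : Prop :=
  U u /\ orthogonal_to U (vsub v u).

(* angle(U,V) = || U_natural - V_natural ||  <=  c  (operator norm, unfolded) *)
Definition angle_le {n} (U V : vec n -> Prop) (c : R) : Prop :=
  forall v u1 u2, orth_proj U v u1 -> orth_proj V v u2 -> vnorm (vsub u1 u2) <= c * vnorm v.

(* Main.v *)
Require Import Defs.
From mathcomp Require Import ssreflect ssrfun ssrbool eqtype ssrnat seq fintype bigop.
From Stdlib Require Import Reals Lra Classical ClassicalEpsilon FunctionalExtensionality.
Set Implicit Arguments.
Unset Strict Implicit.
Local Open Scope R_scope.

Ltac vext := apply functional_extensionality => ?; rewrite /vsub /vadd /vscale /vzero /=; ring.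

Lemma sum_add (I : Type) (r : seq I) (P : pred I) (F G : I -> R) :
  \big[Rplus/0]_(i <- r | P i) (F i + G i) =
  \big[Rplus/0]_(i <- r | P i) F i + \big[Rplus/0]_(i <- r | P i) G i.
Proof. exact: big_split. Qed.

Lemma sum_scal (I : Type) (r : seq I) (P : pred I) (F : I -> R) c :
  \big[Rplus/0]_(i <- r | P i) (c * F i) = c * \big[Rplus/0]_(i <- r | P i) F i.
Proof.
apply: (big_ind2 (fun a b => a = c * b)).
- ring.
- move=> x1 x2 y1 y2 -> ->; ring.
- by [].
Qed.

Lemma sum_ge0 (I : Type) (r : seq I) (P : pred I) (F : I -> R) :
  (forall i, P i -> 0 <= F i) -> 0 <= \big[Rplus/0]_(i <- r | P i) F i.
Proof.
move=> H; apply: (big_ind (fun a => 0 <= a)); [lra| move=> a b ? ?; lra| exact H].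
Qed.

Lemma dot_comm n (u v : vec n) : dot u v = dot v u.
Proof. rewrite /dot; apply: eq_bigr => i _; ring. Qed.

Lemma dot_add_l n (u v w : vec n) : dot (vadd u v) w = dot u w + dot v w.
Proof. rewrite /dot -sum_add; apply: eq_bigr => i _; rewrite /vadd; ring. Qed.

Lemma dot_scale_l n c (u w : vec n) : dot (vscale c u) w = c * dot u w.
Proof. rewrite /dot -sum_scal; apply: eq_bigr => i _; rewrite /vscale; ring. Qed.

Lemma dot_sub_l n (u v w : vec n) : dot (vsub u v) w = dot u w - dot v w.
Proof.
have -> : vsub u v = vadd u (vscale (-1) v) by vext.
rewrite dot_add_l dot_scale_l; ring.
Qed.

Lemma dot_add_r n (u v w : vec n) : dot w (vadd u v) = dot w u + dot w v.
Proof. by rewrite dot_comm dot_add_l !(dot_comm w). Qed.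
Lemma dot_sub_r n (u v w : vec n) : dot w (vsub u v) = dot w u - dot w v.
Proof. by rewrite dot_comm dot_sub_l !(dot_comm w). Qed.
Lemma dot_scale_r n c (u w : vec n) : dot w (vscale c u) = c * dot w u.
Proof. by rewrite dot_comm dot_scale_l (dot_comm w). Qed.

Lemma dot_ge0 n (u : vec n) : 0 <= dot u u.
Proof. apply: sum_ge0 => i _; nra. Qed.

Lemma dot_zero_l n (u : vec n) : dot vzero u = 0.
Proof. rewrite /dot big1 // => i _; rewrite /vzero; ring. Qed.

Lemma vnorm_ge0 n (u : vec n) : 0 <= vnorm u.
Proof. exact: sqrt_pos. Qed.

Lemma vnorm_sq n (u : vec n) : vnorm u * vnorm u = dot u u.
Proof. rewrite /vnorm sqrt_sqrt //; exact: dot_ge0. Qed.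

Lemma vnorm_zero n : vnorm (@vzero n) = 0.
Proof. by rewrite /vnorm dot_zero_l sqrt_0. Qed.

Lemma cs_sq n (u v : vec n) : dot u v * dot u v <= dot u u * dot v v.
Proof.
set p := dot u v; set a := dot u u; set b := dot v v.
have Q : forall t, 0 <= a - 2 * t * p + t * t * b.
  move=> t; have := dot_ge0 (vsub u (vscale t v)).
  rewrite !dot_sub_l !dot_sub_r !dot_scale_l !dot_scale_r (dot_comm v u) -/p -/a -/b.
  lra.
have a0 : 0 <= a by apply: dot_ge0.
have b0 : 0 <= b by apply: dot_ge0.
case: (Req_dec b 0) => hb.
- case: (Req_dec p 0) => hp; first by rewrite hp hb; lra.
  have := Q ((a + 1) / (2 * p)).
  rewrite hb.
  have -> : a - 2 * ((a + 1) / (2 * p)) * p + (a + 1) / (2 * p) * ((a + 1) / (2 * p)) * 0 = -1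
    by field.
  lra.
- have := Q (p / b).
  have -> : a - 2 * (p / b) * p + p / b * (p / b) * b = a - p * p / b by field.
  move=> H.
  have : p * p / b <= a by lra.
  move=> H2.
  have bp : 0 < b by lra.
  have := Rmult_le_compat_r b _ _ (Rlt_le _ _ bp) H2.
  have -> : p * p / b * b = p * p by field.
  lra.
Qed.

Lemma cs_abs n (u v : vec n) : Rabs (dot u v) <= vnorm u * vnorm v.
Proof.
rewrite /vnorm -sqrt_mult; try exact: dot_ge0.
rewrite -sqrt_Rsqr_abs; apply: sqrt_le_1_alt; rewrite /Rsqr; exact: cs_sq.
Qed.

Lemma cs n (u v : vec n) : dot u v <= vnorm u * vnorm v.
Proof. have := cs_abs u v; have := Rle_abs (dot u v); lra. Qed.

Lemma vnorm_le_sq n (u : vec n) c : 0 <= c -> dot u u <= c * c -> vnorm u <= c.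
Proof.
move=> c0 H; rewrite /vnorm -(sqrt_square c) //; exact: sqrt_le_1_alt.
Qed.

Lemma vnorm_add n (u v : vec n) : vnorm (vadd u v) <= vnorm u + vnorm v.
Proof.
apply: vnorm_le_sq; first by have := vnorm_ge0 u; have := vnorm_ge0 v; lra.
rewrite !dot_add_l !dot_add_r (dot_comm v u) -!vnorm_sq.
have := cs u v; nra.
Qed.

Lemma vnorm_sub n (u v : vec n) : vnorm (vsub u v) <= vnorm u + vnorm v.
Proof.
apply: vnorm_le_sq; first by have := vnorm_ge0 u; have := vnorm_ge0 v; lra.
rewrite !dot_sub_l !dot_sub_r (dot_comm v u) -!vnorm_sq.
have := cs_abs u v; have := Rle_abs (-(dot u v)); rewrite Rabs_Ropp; nra.
Qed.

Lemma vnorm_scale n c (u : vec n) : vnorm (vscale c u) = Rabs c * vnorm u.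
Proof.
rewrite /vnorm dot_scale_l dot_scale_r -Rmult_assoc sqrt_mult.
- by rewrite -sqrt_Rsqr_abs.
- nra.
- exact: dot_ge0.
Qed.

Lemma vnorm_sym n (u v : vec n) : vnorm (vsub u v) = vnorm (vsub v u).
Proof.
have -> : vsub u v = vscale (-1) (vsub v u) by vext.
rewrite vnorm_scale Rabs_Ropp Rabs_R1; ring.
Qed.

Lemma pyth n (u v : vec n) : dot u v = 0 ->
  dot (vadd u v) (vadd u v) = dot u u + dot v v.
Proof. move=> h; rewrite !dot_add_l !dot_add_r (dot_comm v u) h; ring. Qed.

Definition span n m (e : 'I_m -> vec n) (c : 'I_m -> R) : vec n :=
  fun k => \big[Rplus/0]_(i < m) (c i * e i k).

Lemma dot_span n m (e : 'I_m -> vec n) c (w : vec n) :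
  dot (span e c) w = \big[Rplus/0]_(i < m) (c i * dot (e i) w).
Proof.
rewrite /dot /span.
under eq_bigr => k _ do rewrite Rmult_comm -sum_scal.
rewrite exchange_big /=; apply: eq_bigr => i _.
rewrite -sum_scal; apply: eq_bigr => k _; ring.
Qed.

Lemma sum_delta m (a : 'I_m -> R) j :
  \big[Rplus/0]_(i < m) (a i * (if i == j then 1 else 0)) = a j.
Proof.
rewrite (bigD1 j) //= eqxx big1; first ring.
by move=> i /negbTE ->; ring.
Qed.

Lemma span_sub n m (e : 'I_m -> vec n) c c' :
  vsub (span e c) (span e c') = span e (fun i => c i - c' i).
Proof.
apply: functional_extensionality => k; rewrite /vsub /span.
have H2 : \big[Rplus/0]_(i < m) ((-1) * (c' i * e i k)) = -1 * \big[Rplus/0]_(i < m) (c' i * e i k)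
  by apply: sum_scal.
have H1 : \big[Rplus/0]_(i < m) ((c i - c' i) * e i k) =
   \big[Rplus/0]_(i < m) (c i * e i k) + \big[Rplus/0]_(i < m) ((-1) * (c' i * e i k)).
  rewrite -sum_add; apply: eq_bigr => i _; ring.
rewrite H1 H2; ring.
Qed.

Lemma span_scale n m (e : 'I_m -> vec n) c a :
  vscale a (span e c) = span e (fun i => a * c i).
Proof.
apply: functional_extensionality => k; rewrite /vscale /span -sum_scal.
apply: eq_bigr => i _; ring.
Qed.

Section Sub.
Variables (n m : nat) (U : vec n -> Prop) (HU : subspace_dim m U).

Lemma sub_scale c v : U v -> U (vscale c v).
Proof.
case: HU => e [_ He] /He [cv ->].
apply/He; exists (fun i => c * cv i); exact: (span_scale e cv c).
Qed.

Lemma sub_sub a b : U a -> U b -> U (vsub a b).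
Proof.
case: HU => e [_ He] /He [ca ->] /He [cb ->].
apply/He; exists (fun i => ca i - cb i); exact: (span_sub e ca cb).
Qed.

Lemma proj_exists v : exists p, orth_proj U v p.
Proof.
case: HU => e [Hon He].
exists (span e (fun i => dot v (e i))); split.
- apply/He; by eexists.
- move=> u /He [c ->]; rewrite dot_span big1 // => j _.
  rewrite dot_sub_r (dot_comm (e j) (span _ _)) dot_span.
  under eq_bigr => i _ do rewrite Hon.
  rewrite sum_delta dot_comm; ring.
Qed.
End Sub.

Definition onesided n (U V : vec n -> Prop) (eps : R) : Prop :=
  forall u, U u -> exists eta, V eta /\ vnorm (vsub u eta) <= eps * vnorm u.

Lemma dot_sub_sq n (a b : vec n) : dot (vsub a b) (vsub a b) = dot a a - 2 * dot a b + dot b b.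
Proof. rewrite !dot_sub_l !dot_sub_r (dot_comm b a); ring. Qed.

Lemma sq_cancel a b : 0 <= a -> 0 <= b -> a * a <= a * b -> a <= b.
Proof. move=> ha hb h; nra. Qed.

Lemma combine n m (U V : vec n -> Prop) eps v u1 u2 :
  subspace_dim m V -> 0 <= eps ->
  onesided U V eps -> onesided V U eps ->
  orth_proj U v u1 -> orth_proj V v u2 ->
  vnorm (vsub u1 u2) <= eps * vnorm v.
Proof.
move=> HV e0 HUV HVU [Uu1 Ou1] [Vu2 Ou2].
have [pv [Vpv Opv]] := proj_exists HV u1.
set g := vsub u1 pv.
have gbound : vnorm g <= eps * vnorm u1.
  have [eta [Veta Heta]] := HUV u1 Uu1.
  apply: Rle_trans Heta; apply: sq_cancel; try exact: vnorm_ge0.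
  rewrite vnorm_sq.
  have -> : dot g g = dot g (vsub u1 eta).
    rewrite /g !dot_sub_r (dot_comm _ pv) (dot_comm _ eta) Opv // Opv //.
  exact: cs.
set k := vsub u2 pv.
have Vk : V k by apply: (sub_sub HV).
set p := vsub v u1.
have kp : dot k (vsub p k) = 0.
  have -> : vsub p k = vsub (vsub v u2) g by rewrite /p /k /g; vext.
  rewrite dot_sub_r.
  move: (Ou2 k Vk) (Opv k Vk); rewrite -/g; lra.
have kbound : vnorm k <= eps * vnorm p.
  have [zeta [Uz Hz]] := HVU k Vk.
  apply: sq_cancel; first exact: vnorm_ge0.
    by have := vnorm_ge0 p; nra.
  rewrite vnorm_sq.
  have -> : dot k k = dot (vsub k zeta) p.
    rewrite dot_sub_r in kp; rewrite dot_sub_l (dot_comm zeta p) (dot_comm k p).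
    rewrite (dot_comm p zeta) Ou1 //; rewrite dot_comm; lra.
  apply: Rle_trans (cs _ _) _.
  have := vnorm_ge0 p; have := vnorm_ge0 k; nra.
have gk : dot g k = 0 by rewrite dot_comm; apply: Opv.
have -> : vsub u1 u2 = vsub g k by rewrite /g /k; vext.
apply: vnorm_le_sq; first by have := vnorm_ge0 v; nra.
have Hv : dot v v = dot u1 u1 + dot p p.
  have -> : v = vadd u1 p by rewrite /p; vext.
  rewrite pyth //; exact: Ou1.
rewrite dot_sub_sq gk.
have : dot g g <= eps * eps * dot u1 u1.
  rewrite -!vnorm_sq; have := vnorm_ge0 g; nra.
have : dot k k <= eps * eps * dot p p.
  rewrite -!vnorm_sq; have := vnorm_ge0 k; nra.
rewrite -(vnorm_sq v) in Hv; nra.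
Qed.

Lemma rsup_lub (E : R -> Prop) : bound E -> (exists r, E r) -> is_lub E (Rsup E).
Proof.
move=> hb he; rewrite /Rsup.
have := epsilon_spec (inhabits 0) (fun l => (bound E /\ exists r, E r) -> is_lub E l).
apply => //.
have [l hl] := completeness E hb he; by exists l.
Qed.

Section Dist.
Variables (n : nat) (S : vec n -> Prop) (b0 : vec n) (Sb0 : S b0) (z : vec n).

Let F := fun r => exists b, S b /\ - r = vnorm (vsub z b).

Lemma F_lub : is_lub F (Rsup F).
Proof.
apply: rsup_lub.
- exists 0 => r [b [_ hb]]; have := vnorm_ge0 (vsub z b); lra.
- exists (- vnorm (vsub z b0)), b0; split => //; ring.
Qed.

Lemma dist_eq : Defs.dist z S = - Rsup F.
Proof. by []. Qed.

Lemma dist_ge0 : 0 <= Defs.dist z S.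
Proof.
rewrite dist_eq; have [_ H] := F_lub.
have : Rsup F <= 0.
  apply: H => r [b [_ hb]]; have := vnorm_ge0 (vsub z b); lra.
lra.
Qed.

Lemma dist_le b : S b -> Defs.dist z S <= vnorm (vsub z b).
Proof.
move=> Sb; rewrite dist_eq; have [H _] := F_lub.
have : - vnorm (vsub z b) <= Rsup F by apply: H; exists b; split => //; ring.
lra.
Qed.

Lemma dist_approx eps : 0 < eps -> exists b, S b /\ vnorm (vsub z b) < Defs.dist z S + eps.
Proof.
move=> ep; apply: NNPP => Hn.
rewrite dist_eq in Hn; have [_ H] := F_lub.
have : Rsup F <= Rsup F - eps.
  apply: H => r [b [Sb hb]].
  have : ~ (vnorm (vsub z b) < - Rsup F + eps) by move=> h; apply: Hn; exists b.
  lra.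
lra.
Qed.
End Dist.

Section DH.
Variables (n : nat) (S1 S2 : vec n -> Prop) (d : R) (y1 y2 : vec n)
  (S1y : S1 y1) (S2y : S2 y2)
  (B1 : forall x, S1 x -> vnorm x <= d) (B2 : forall x, S2 x -> vnorm x <= d).

Lemma dH_ge_dist z : S1 z -> Defs.dist z S2 <= dH S1 S2 /\ 0 <= dH S1 S2.
Proof.
move=> Sz.
have L1 : is_lub (fun r => exists y, S1 y /\ r = Defs.dist y S2)
             (Rsup (fun r => exists y, S1 y /\ r = Defs.dist y S2)).
  apply: rsup_lub; last by exists (Defs.dist z S2), z.
  exists (d + d) => r [y [Sy ->]].
  apply: Rle_trans (dist_le S2y y S2y) _.
  apply: Rle_trans (vnorm_sub _ _) _; have := B1 Sy; have := B2 S2y; lra.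
have L2 : is_lub (fun r => exists y, S2 y /\ r = Defs.dist y S1)
             (Rsup (fun r => exists y, S2 y /\ r = Defs.dist y S1)).
  apply: rsup_lub; last by exists (Defs.dist y2 S1), y2.
  exists (d + d) => r [y [Sy ->]].
  apply: Rle_trans (dist_le S1y y S1y) _.
  apply: Rle_trans (vnorm_sub _ _) _; have := B2 Sy; have := B1 S1y; lra.
have h1 : Defs.dist z S2 <= Rsup (fun r => exists y, S1 y /\ r = Defs.dist y S2).
  by apply: (proj1 L1); exists z.
have h2 : Defs.dist y2 S1 <= Rsup (fun r => exists y, S2 y /\ r = Defs.dist y S1).
  by apply: (proj1 L2); exists y2.
have := dist_ge0 S2y z; have := dist_ge0 S1y y2.
rewrite /dH; lra.
Qed.

Lemma dH_approx z eps : S1 z -> 0 < eps ->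
  exists w, S2 w /\ vnorm (vsub z w) < dH S1 S2 + eps.
Proof.
move=> Sz ep; have [b [Sb hb]] := dist_approx S2y z ep.
exists b; split => //; have [h _] := dH_ge_dist Sz; lra.
Qed.
End DH.

Lemma dH_sym n (S1 S2 : vec n -> Prop) : dH S1 S2 = dH S2 S1.
Proof. rewrite /dH; ring. Qed.

Lemma rpow_pos a p : 0 < a -> rpow a p = Rpower a p.
Proof. move=> h; rewrite /rpow; case: Rlt_dec => //= ; lra. Qed.

Lemma rpow_ge0 a p : 0 <= rpow a p.
Proof. rewrite /rpow; case: Rlt_dec => h /=; [left; rewrite /Rpower; exact: exp_pos | lra]. Qed.

Lemma rpow_mono a b p : 0 <= a <= b -> 0 < p -> rpow a p <= rpow b p.
Proof.
move=> [ha hab] hp; case: (Req_dec a 0) => [->|a0].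
- have -> : rpow 0 p = 0 by rewrite /rpow; case: Rlt_dec => h //=; lra.
  exact: rpow_ge0.
- rewrite !rpow_pos; try lra; apply: Rle_Rpower_l; lra.
Qed.

Lemma vscale_1 n (u : vec n) : vscale 1 u = u.
Proof. by vext. Qed.
Lemma vscale_0 n (u : vec n) : vscale 0 u = vzero.
Proof. by vext. Qed.
Lemma vsub_0 n (u : vec n) : vsub u vzero = u.
Proof. by vext. Qed.

Section Taylor.
Variables (n m : nat) (T : vec n -> Prop) (HT : subspace_dim m T)
  (f : vec n -> vec n) (Df : vec n -> vec n -> vec n) (L alpha : R)
  (L0 : 0 < L) (a0 : 0 < alpha)
  (HD : forall xi, T xi -> has_derivative_on T f xi (Df xi))
  (f0 : f vzero = vzero)
  (D0 : forall h, T h -> Df vzero h = vzero)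
  (Hol : forall xi eta h, T xi -> T eta -> T h ->
         vnorm (vsub (Df xi h) (Df eta h)) <= L * rpow (vnorm (vsub xi eta)) alpha * vnorm h).

Lemma taylor xi : T xi -> vnorm (f xi) <= L * rpow (vnorm xi) alpha * vnorm xi.
Proof.
move=> Txi.
set e := f xi.
pose h t := dot (f (vscale t xi)) e.
pose h' t := dot (Df (vscale t xi) xi) e.
have Hder : forall t, derivable_pt_lim h t (h' t).
  move=> t eps ep.
  have Tt : T (vscale t xi) by apply: (sub_scale HT).
  have [Lin Hd] := HD Tt.
  set K := vnorm xi * vnorm e + 1.
  have K0 : 0 < K by rewrite /K; have := vnorm_ge0 xi; have := vnorm_ge0 e; nra.
  have [d0 [d0p Hd0]] := Hd (eps / K) (Rdiv_lt_0_compat _ _ ep K0).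
  have dp : 0 < d0 / (vnorm xi + 1) by apply: Rdiv_lt_0_compat => //; have := vnorm_ge0 xi; lra.
  exists (mkposreal _ dp) => s s0 /= hs.
  have eqv : vsub (vscale (t + s) xi) (vscale t xi) = vscale s xi by vext.
  have Ts : T (vscale (t + s) xi) by apply: (sub_scale HT).
  have nsx : vnorm (vscale s xi) = Rabs s * vnorm xi by apply: vnorm_scale.
  have hsmall : vnorm (vsub (vscale (t + s) xi) (vscale t xi)) < d0.
    rewrite eqv nsx.
    have xi0 := vnorm_ge0 xi.
    have : Rabs s * (vnorm xi + 1) < d0.
      have := Rmult_lt_compat_r (vnorm xi + 1) _ _ ltac:(lra) hs.
      by have -> : d0 / (vnorm xi + 1) * (vnorm xi + 1) = d0 by field; lra.
    have := Rabs_pos s; nra.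
  have H1 := Hd0 _ Ts hsmall.
  rewrite eqv in H1.
  have lin : Df (vscale t xi) (vscale s xi) = vscale s (Df (vscale t xi) xi).
    have := Lin s 0 xi xi Txi Txi.
    have -> : vadd (vscale s xi) (vscale 0 xi) = vscale s xi by vext.
    move=> ->; by vext.
  rewrite lin nsx in H1.
  rewrite /h /h'.
  have -> : (dot (f (vscale (t + s) xi)) e - dot (f (vscale t xi)) e) / s
            - dot (Df (vscale t xi) xi) e
          = dot (vsub (vsub (f (vscale (t + s) xi)) (f (vscale t xi)))
                      (vscale s (Df (vscale t xi) xi))) e / s.
    rewrite !dot_sub_l dot_scale_l; field; exact: s0.
  rewrite /Rdiv Rabs_mult Rabs_inv -/(Rdiv _ _).
  apply: (Rle_lt_trans _ (eps / K * (Rabs s * vnorm xi) * vnorm e / Rabs s)).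
  - apply: Rmult_le_compat_r; first by left; apply: Rinv_0_lt_compat; exact: Rabs_pos_lt.
    apply: Rle_trans (cs_abs _ _) _.
    apply: Rmult_le_compat_r => //; exact: vnorm_ge0.
  - have sp := Rabs_pos_lt _ s0.
    have -> : eps / K * (Rabs s * vnorm xi) * vnorm e / Rabs s = eps * (vnorm xi * vnorm e / K)
      by field; lra.
    have : vnorm xi * vnorm e / K < 1.
      apply: (Rmult_lt_reg_r K) => //.
      have -> : vnorm xi * vnorm e / K * K = vnorm xi * vnorm e by field; lra.
      rewrite /K; lra.
    have := Rmult_le_pos _ _ (vnorm_ge0 xi) (vnorm_ge0 e).
    move=> ? ?.
    have : 0 <= vnorm xi * vnorm e / K by apply: Rmult_le_pos => //; left; apply: Rinv_0_lt_compat.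
    nra.
have [c [Hc c01]] := MVT_cor2 h h' 0 1 Rlt_0_1 (fun c _ => Hder c).
have h1 : h 1 = dot e e by rewrite /h vscale_1.
have h0 : h 0 = 0 by rewrite /h vscale_0 f0 dot_zero_l.
rewrite h1 h0 !Rminus_0_r Rmult_1_r /h' in Hc.
have Tc : T (vscale c xi) by apply: (sub_scale HT).
have T0 : T vzero by rewrite -(vscale_0 xi); apply: (sub_scale HT).
have E : Df (vscale c xi) xi = vsub (Df (vscale c xi) xi) (Df vzero xi)
  by rewrite D0 // vsub_0.
rewrite E in Hc.
apply: sq_cancel; first exact: vnorm_ge0.
  apply: Rmult_le_pos; last exact: vnorm_ge0.
  apply: Rmult_le_pos; [lra| exact: rpow_ge0].
rewrite vnorm_sq -/e Hc.
apply: Rle_trans (cs _ _) _.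
have H2 := Hol Tc T0 Txi.
rewrite vsub_0 vnorm_scale Rabs_right in H2; last lra.
have : rpow (c * vnorm xi) alpha <= rpow (vnorm xi) alpha.
  apply: rpow_mono => //; have := vnorm_ge0 xi; nra.
have := rpow_ge0 (c * vnorm xi) alpha.
have := vnorm_ge0 e; have := vnorm_ge0 xi.
move=> ? ? ? ?.
have : vnorm (vsub (Df (vscale c xi) xi) (Df vzero xi)) <= L * rpow (vnorm xi) alpha * vnorm xi.
  apply: Rle_trans H2 _; apply: Rmult_le_compat_r => //; apply: Rmult_le_compat_l; lra.
move=> H3; rewrite Rmult_comm; apply: Rmult_le_compat_l => //.
Qed.
End Taylor.

Lemma rpow_ge_self r a : 0 < r < 1 -> 0 < a <= 1 -> r <= Rpower r a.
Proof.
move=> [r0 r1] [a0 a1].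
have lr : ln r < 0 by rewrite -ln_1; apply: ln_increasing.
rewrite /Rpower -{1}(exp_ln r) //.
have : ln r <= a * ln r by nra.
case/Rle_lt_or_eq_dec => h; [left; exact: exp_increasing | rewrite -h; right; reflexivity].
Qed.

Lemma rpow_mulc c r a : 0 < c -> 0 < r -> rpow (c * r) a = Rpower c a * rpow r a.
Proof.
move=> c0 r0; rewrite !rpow_pos //; last exact: Rmult_lt_0_compat.
by rewrite Rpower_mult_distr.
Qed.

Lemma ts_zero n (S : vec n -> Prop) x : S x -> tangent_space S x vzero.
Proof.
move=> Sx eps ep; exists x, 1; split => //; split; first lra.
have -> : vsub x x = vzero by vext.
have -> : vsub (vscale 1 vzero) vzero = (@vzero n) by vext.
rewrite vnorm_zero; lra.
Qed.

Lemma class_at m n alpha Rr L d (S : vec n -> Prop) x :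
  C1a_class m alpha Rr L d S -> S x ->
  subspace_dim m (tangent_space S x) /\
    exists (f : vec n -> vec n) (Df : vec n -> vec n -> vec n),
      (forall xi, tangent_space S x xi -> orthogonal_to (tangent_space S x) (f xi)) /\
      (forall xi, tangent_space S x xi -> has_derivative_on (tangent_space S x) f xi (Df xi)) /\
      (forall z, (S z /\ vnorm (vsub z x) < Rr) <->
                 ((exists xi, tangent_space S x xi /\ z = vadd x (vadd xi (f xi))) /\ vnorm (vsub z x) < Rr)) /\
      f vzero = vzero /\
      (forall h, tangent_space S x h -> Df vzero h = vzero) /\
      (forall xi eta h, tangent_space S x xi -> tangent_space S x eta -> tangent_space S x h ->
         vnorm (vsub (Df xi h) (Df eta h)) <= L * rpow (vnorm (vsub xi eta)) alpha * vnorm h) /\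
      (forall xi eta, tangent_space S x xi -> tangent_space S x eta -> vnorm (vsub (f xi) (f eta)) <= vnorm (vsub xi eta)).
Proof. move=> [_ [_ H]] Sx; exact: (H x Sx). Qed.

Lemma onesided_main m n Rr L d alpha A (S1 S2 : vec n -> Prop) x y del :
  0 < Rr -> 0 < L -> 0 < alpha <= 1 -> 1 <= A ->
  C1a_class m alpha Rr L d S1 -> C1a_class m alpha Rr L d S2 ->
  S1 x -> S2 y ->
  dH S1 S2 < del -> del < Rr ^ 2 / (64 * A ^ 2) -> del < 1 ->
  vnorm (vsub x y) <= A * dH S1 S2 ->
  onesided (tangent_space S1 x) (tangent_space S2 y)
    ((L * (1 + (4 * A) ^ 2) + 2 * A) * rpow del (alpha / 2)).
Proof.
move=> Rr0 L0 [a0 a1] A1 C1 C2 Sx Sy hdel hdR hd1 hxy.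
have B1 : forall z, S1 z -> vnorm z <= d by case: C1 => _ [].
have B2 : forall z, S2 z -> vnorm z <= d by case: C2 => _ [].
have [_ dH0] := dH_ge_dist Sx Sy B1 B2 Sx.
have [HT1 [f1 [Df1 [Fo1 [HD1 [Ch1 [f01 [D01 [Hol1 Lip1]]]]]]]]] := class_at C1 Sx.
have [HT2 [f2 [Df2 [Fo2 [HD2 [Ch2 [f02 [D02 [Hol2 Lip2]]]]]]]]] := class_at C2 Sy.
set U := tangent_space S1 x in HT1 Fo1 HD1 Ch1 D01 Hol1 Lip1 *.
set V := tangent_space S2 y in HT2 Fo2 HD2 Ch2 D02 Hol2 Lip2 *.
set K := (L * (1 + (4 * A) ^ 2) + 2 * A) * rpow del (alpha / 2).
have del0 : 0 < del by lra.
have K0 : 0 <= K.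
  rewrite /K; apply: Rmult_le_pos; last exact: rpow_ge0; nra.
move=> u Uu.
have V0 : V vzero by apply: ts_zero.
have U0 : U vzero by apply: ts_zero.
case: (Req_dec (vnorm u) 0) => hu0.
  exists vzero; split => //; rewrite vsub_0 hu0; lra.
have nu0 : 0 < vnorm u by have := vnorm_ge0 u; lra.
set nu := vnorm u in hu0 nu0 *.
set r := sqrt del.
have r0 : 0 < r by apply: sqrt_lt_R0.
have rr : r * r = del by rewrite /r sqrt_sqrt; lra.
have r1 : r < 1 by nra.
have A0 : 0 < A by lra.
have rR : r < Rr / (8 * A).
  have : r * r < Rr / (8 * A) * (Rr / (8 * A)).
    rewrite rr; have -> : Rr / (8 * A) * (Rr / (8 * A)) = Rr ^ 2 / (64 * A ^ 2) by field; lra.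
    done.
  have : 0 < Rr / (8 * A) by apply: Rdiv_lt_0_compat; lra.
  nra.
have r8 : 8 * A * r < Rr.
  have := Rmult_lt_compat_l (8 * A) _ _ ltac:(lra) rR.
  have -> : 8 * A * (Rr / (8 * A)) = Rr by field; lra.
  done.
have delr : del <= r by nra.
set xi := vscale (r / nu) u.
have Uxi : U xi by apply: (sub_scale HT1).
have nxi : vnorm xi = r.
  rewrite /xi vnorm_scale Rabs_right; first by rewrite -/nu; field; lra.
  left; apply: Rdiv_lt_0_compat; lra.
have fxi1 : vnorm (f1 xi) <= vnorm xi.
  have := Lip1 _ _ Uxi U0; rewrite f01 !vsub_0; done.
set z := vadd x (vadd xi (f1 xi)).
have zx : vsub z x = vadd xi (f1 xi) by rewrite /z; vext.
have nzx : vnorm (vsub z x) <= 2 * r.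
  rewrite zx; apply: Rle_trans (vnorm_add _ _) _; lra.
have S1z : S1 z.
  have : (exists xi0, U xi0 /\ z = vadd x (vadd xi0 (f1 xi0))) /\ vnorm (vsub z x) < Rr.
    split; [by exists xi | nra].
  by move/Ch1 => [].
have [w [S2w hw]] := dH_approx Sx Sy B1 B2 S1z (Rlt_Rminus _ _ hdel).
have zw : vnorm (vsub z w) < del by lra.
have wy_eq : vsub w y = vadd (vsub (vsub z x) (vsub z w)) (vsub x y) by vext.
have nwy : vnorm (vsub w y) <= 4 * A * r.
  rewrite wy_eq; apply: Rle_trans (vnorm_add _ _) _.
  have := vnorm_sub (vsub z x) (vsub z w).
  have : A * dH S1 S2 <= A * del by apply: Rmult_le_compat_l; lra.
  nra.
have [[eta [Veta weq]] _] : (exists eta, V eta /\ w = vadd y (vadd eta (f2 eta))) /\ vnorm (vsub w y) < Rr.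
  apply/Ch2; split => //; nra.
have wy2 : vsub w y = vadd eta (f2 eta) by rewrite weq; vext.
have rho : vnorm eta <= 4 * A * r.
  apply: Rle_trans nwy.
  have : vnorm eta * vnorm eta <= vnorm (vsub w y) * vnorm (vsub w y).
    rewrite !vnorm_sq wy2 pyth; first by have := dot_ge0 (f2 eta); lra.
    exact: (Fo2 eta Veta eta Veta).
  have := vnorm_ge0 eta; have := vnorm_ge0 (vsub w y).
  move=> ha hb hc; apply: Rnot_lt_le => hd; nra.
have T1 : vnorm (f1 xi) <= L * Rpower r alpha * r.
  have := taylor HT1 L0 a0 HD1 f01 D01 Hol1 Uxi.
  by rewrite nxi rpow_pos.
have T2 : vnorm (f2 eta) <= L * (4 * A) ^ 2 * Rpower r alpha * r.
  have := taylor HT2 L0 a0 HD2 f02 D02 Hol2 Veta.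
  have hr : rpow (vnorm eta) alpha <= 4 * A * Rpower r alpha.
    apply: Rle_trans (rpow_mono _ a0) _.
      split; [exact: vnorm_ge0 | exact: rho].
    rewrite rpow_mulc //; last lra.
    rewrite (rpow_pos _ r0).
    apply: Rmult_le_compat_r; first by left; rewrite /Rpower; apply: exp_pos.
    have := Rle_Rpower (4 * A) alpha 1 ltac:(lra) a1.
    rewrite Rpower_1 //; lra.
  move=> H; apply: Rle_trans H _.
  have := rpow_ge0 (vnorm eta) alpha; have := vnorm_ge0 eta.
  have : 0 < Rpower r alpha by rewrite /Rpower; apply: exp_pos.
  move=> ? ? ?.
  have : L * rpow (vnorm eta) alpha <= L * (4 * A * Rpower r alpha) by apply: Rmult_le_compat_l; lra.
  move=> ?.
  have : L * rpow (vnorm eta) alpha * vnorm eta <= L * (4 * A * Rpower r alpha) * (4 * A * r).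
    apply: Rmult_le_compat => //; apply: Rmult_le_pos; lra.
  move=> ?; nra.
have diff : vsub xi eta = vadd (vsub (vsub (vsub z w) (vsub x y)) (f1 xi)) (f2 eta).
  rewrite weq /z; vext.
have rpa : r <= Rpower r alpha by apply: rpow_ge_self; lra.
have ndiff : vnorm (vsub xi eta) <= r * K.
  rewrite diff; apply: Rle_trans (vnorm_add _ _) _.
  have h1 := vnorm_sub (vsub (vsub z w) (vsub x y)) (f1 xi).
  have h2 := vnorm_sub (vsub z w) (vsub x y).
  have : A * dH S1 S2 <= A * del by apply: Rmult_le_compat_l; lra.
  have : rpow del (alpha / 2) = Rpower r alpha.
    rewrite rpow_pos // /r -Rpower_sqrt // Rpower_mult; f_equal; field.
  move=> hK ?.
  rewrite /K hK.
  have : (1 + A) * del <= 2 * A * r * Rpower r alpha.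
    rewrite -rr.
    have q1 : r * r <= r * Rpower r alpha by apply: Rmult_le_compat_l; lra.
    have q2 : (1 + A) * (r * r) <= 2 * A * (r * r) by apply: Rmult_le_compat_r; nra.
    have q3 : 2 * A * (r * r) <= 2 * A * (r * Rpower r alpha) by apply: Rmult_le_compat_l; lra.
    lra.
  move=> hA; move: h1 h2 hA T1 T2 zw hxy; lra.
exists (vscale (nu / r) eta); split; first by apply: (sub_scale HT2).
have -> : vsub u (vscale (nu / r) eta) = vscale (nu / r) (vsub xi eta).
  rewrite /xi; apply: functional_extensionality => i; rewrite /vsub /vscale; field; lra.
rewrite vnorm_scale Rabs_right; last by left; apply: Rdiv_lt_0_compat.
apply: Rle_trans (Rmult_le_compat_l _ _ _ _ ndiff) _.
  by left; apply: Rdiv_lt_0_compat.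
have -> : nu / r * (r * K) = K * nu by field; lra.
lra.
Qed.

Theorem mainTheorem7 (m n : nat) (Rr L d alpha A : R) (S1 S2 : vec n -> Prop)
    (x y : vec n) :
  0 < Rr -> 0 < L -> 0 < d -> 0 < alpha <= 1 -> 1 <= A ->
  C1a_class m alpha Rr L d S1 -> C1a_class m alpha Rr L d S2 ->
  dH S1 S2 < Rmin (Rmin (Rr ^ 2 / (64 * A ^ 2)) (rpow L (- 2 / alpha))) 1 ->
  S1 x -> S2 y -> vnorm (vsub x y) <= A * dH S1 S2 ->
  angle_le (tangent_space S1 x) (tangent_space S2 y)
    ((L * (1 + (4 * A) ^ 2) + 2 * A) * rpow (dH S1 S2) (alpha / 2)).
Proof.
move=> Rr0 L0 d0 [a0 a1] A1 C1 C2 hH Sx Sy hxy.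
set C := L * (1 + (4 * A) ^ 2) + 2 * A.
have C0 : 0 <= C by rewrite /C; nra.
have B1 : forall z, S1 z -> vnorm z <= d by case: C1 => _ [].
have B2 : forall z, S2 z -> vnorm z <= d by case: C2 => _ [].
have [_ dH0] := dH_ge_dist Sx Sy B1 B2 Sx.
set del := dH S1 S2 in hH hxy dH0 *.
set M := Rmin (Rr ^ 2 / (64 * A ^ 2)) 1.
have hM1 : M <= Rr ^ 2 / (64 * A ^ 2) by apply: Rmin_l.
have hM2 : M <= 1 by apply: Rmin_r.
have dM : del < M.
  apply: Rmin_glb_lt.
  - apply: Rlt_le_trans hH _; apply: Rle_trans (Rmin_l _ _) _; apply: Rmin_l.
  - apply: Rlt_le_trans hH _; apply: Rmin_r.
have M0 : 0 < M by lra.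
move=> v u1 u2 P1 P2.
have HV := proj1 (class_at C2 Sy).
have key : forall del1, del < del1 -> del1 < M ->
    vnorm (vsub u1 u2) <= C * rpow del1 (alpha / 2) * vnorm v.
  move=> del1 h1 h2.
  apply: (combine HV _ _ _ P1 P2).
  - apply: Rmult_le_pos => //; exact: rpow_ge0.
  - apply: (onesided_main Rr0 L0 _ A1 C1 C2 Sx Sy h1) => //; lra.
  - apply: (onesided_main Rr0 L0 _ A1 C2 C1 Sy Sx) => //; try lra.
    + by rewrite dH_sym.
    + by rewrite vnorm_sym dH_sym.
set a := vnorm (vsub u1 u2).
set p := alpha / 2.
have p0 : 0 < p by rewrite /p; lra.
set K := C * vnorm v.
have K0 : 0 <= K by apply: Rmult_le_pos => //; exact: vnorm_ge0.
set s := rpow del p.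
have s0 : 0 <= s by apply: rpow_ge0.
set Mp := Rpower M p.
have sM : s < Mp.
  rewrite /s /Mp; case: (Req_dec del 0) => hd.
  - rewrite hd /rpow; case: Rlt_dec => h /=; first lra.
    rewrite /Rpower; apply: exp_pos.
  - rewrite rpow_pos; last lra.
    apply: Rlt_Rpower_l => //; lra.
apply: Rnot_lt_le => hlt.
have hlt' : K * s < a by rewrite /K /s -/p in hlt *; lra.
set t := s + Rmin ((Mp - s) / 2) ((a - K * s) / (2 * (K + 1))).
have mpos : 0 < Rmin ((Mp - s) / 2) ((a - K * s) / (2 * (K + 1))).
  apply: Rmin_glb_lt; apply: Rdiv_lt_0_compat; lra.
have t0 : 0 < t by rewrite /t; lra.
have st : s < t by rewrite /t; lra.
have tM : t < Mp.
  have := Rmin_l ((Mp - s) / 2) ((a - K * s) / (2 * (K + 1))); rewrite /t; lra.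
have Kt : K * t < a.
  have hm := Rmin_r ((Mp - s) / 2) ((a - K * s) / (2 * (K + 1))).
  have : K * ((a - K * s) / (2 * (K + 1))) < a - K * s.
    have -> : K * ((a - K * s) / (2 * (K + 1))) = (a - K * s) * (K / (2 * (K + 1))) by field; lra.
    have : K / (2 * (K + 1)) < 1.
      apply: (Rmult_lt_reg_r (2 * (K + 1))); first lra.
      have -> : K / (2 * (K + 1)) * (2 * (K + 1)) = K by field; lra.
      lra.
    have : 0 <= K / (2 * (K + 1)) by apply: Rmult_le_pos => //; left; apply: Rinv_0_lt_compat; lra.
    nra.
  rewrite /t.
  have := Rmult_le_compat_l K _ _ K0 hm.
  lra.
set del1 := Rpower t (/ p).
have d1t : rpow del1 p = t.
  rewrite rpow_pos; last by rewrite /del1 /Rpower; apply: exp_pos.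
  rewrite /del1 Rpower_mult Rinv_l; [exact: Rpower_1 | lra].
have d1M : del1 < M.
  apply: Rnot_le_lt => h.
  have : Mp <= t.
    rewrite -d1t rpow_pos; last by rewrite /del1 /Rpower; apply: exp_pos.
    apply: Rle_Rpower_l; lra.
  lra.
have dd1 : del < del1.
  apply: Rnot_le_lt => h.
  case: (Req_dec del 0) => hd.
  - have : 0 < del1 by rewrite /del1 /Rpower; apply: exp_pos.
    lra.
  - have : t <= s.
      rewrite -d1t /s !rpow_pos; try lra.
      + apply: Rle_Rpower_l; first lra.
        split => //; rewrite /del1 /Rpower; apply: exp_pos.
      + rewrite /del1 /Rpower; apply: exp_pos.
    lra.
have := key del1 dd1 d1M.
rewrite -/p d1t -/a.
rewrite /K in Kt; lra.
Qed.
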